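(* Let $j_1\ge0$ and let $J\ge j_1$ be an integer with $J\equiv j_1\pmod 2$. Then $$\sum_{\substack{j_2,j_3\ge0,\ j_2+j_3=J\\ (j_1,j_2,j_3)\in\mathbf J}}\phi_{j_1,j_2,j_3}(x_{12},x_{13},1)=\frac{\left(1-x_{13}^{j_1+1}x_{12}^{-j_1-1}\right)\left(1-x_{13}^{j_1+1}x_{12}^{j_1+1}\right)}{(j_1+1)\,x_{13}^{j_1}\,(1-x_{13}/x_{12})(1-x_{13}x_{12})}.$$
   Context: A triple $(j_1,j_2,j_3)$ of nonnegative integers is admissible if $|j_1-j_2|\le j_3\le j_1+j_2$ and $j_1+j_2+j_3$ is even; $\mathbf J$ denotes the set of admissible triples. Let $\mathcal H=\mathbb C[x_{12}+x_{12}^{-1},x_{13}+x_{13}^{-1},x_{23}+x_{23}^{-1}]\subset\mathbb C[x_{12}^{\pm1},x_{13}^{\pm1},x_{23}^{\pm1}]$. For $a,b\in\{\pm1\}$ set $K_{a,b}(j_1,j_2,j_3)=ab\,\frac{(aj_1+bj_2+j_3+a+b+2)(aj_1+bj_2-j_3+a+b)}{4(j_1+1)(j_2+1)}$. The genus two Schur polynomials $(\phi_{j_1,j_2,j_3})_{(j_1,j_2,j_3)\in\mathbf J}$ are the unique family in $\mathcal H$ with $\phi_{0,0,0}=1$ such that for all admissible $(j_1,j_2,j_3)$: $(x_{12}+x_{12}^{-1})\phi_{j_1,j_2,j_3}=\sum_{a,b\in\{\pm1\}}K_{a,b}(j_1,j_2,j_3)\phi_{j_1+a,j_2+b,j_3}$,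 $(x_{13}+x_{13}^{-1})\phi_{j_1,j_2,j_3}=\sum_{a,b\in\{\pm1\}}K_{a,b}(j_1,j_3,j_2)\phi_{j_1+a,j_2,j_3+b}$, $(x_{23}+x_{23}^{-1})\phi_{j_1,j_2,j_3}=\sum_{a,b\in\{\pm1\}}K_{a,b}(j_2,j_3,j_1)\phi_{j_1,j_2+a,j_3+b}$, where $\phi$ of a non-admissible triple is interpreted as $0$. *)

(* Defs.v *)
From HB Require Import structures.
From mathcomp Require Import all_boot all_order all_algebra all_field.
From mathcomp.multinomials Require Import mpoly.
Set Implicit Arguments. Unset Strict Implicit. Unset Printing Implicit Defensive.
Import Order.TTheory GRing.Theory Num.Theory.
Local Open Scope ring_scope.

(* The ring H = C[x12+1/x12, x13+1/x13, x23+1/x23] is modelled as the polynomial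
   ring {mpoly algC[3]} in the (algebraically independent) generators
   y12 = 'X_i0, y13 = 'X_i1, y23 = 'X_i2, where y_ab stands for x_ab + x_ab^{-1}. *)
Definition i0 : 'I_3 := @Ordinal 3 0 isT.
Definition i1 : 'I_3 := @Ordinal 3 1 isT.
Definition i2 : 'I_3 := @Ordinal 3 2 isT.

Definition Hpoly := {mpoly algC[3]}.

Definition admissible (j1 j2 j3 : nat) : bool :=
  [&& (j1 - j2 <= j3)%N, (j2 - j1 <= j3)%N, (j3 <= j1 + j2)%N & ~~ odd (j1 + j2 + j3)].

Definition sgnb (a : bool) : int := if a then 1 else -1.

Definition Kc (ba bb : bool) (j1 j2 j3 : nat) : algC :=
  let a : algC := (sgnb ba)%:~R in
  let b : algC := (sgnb bb)%:~R in
  a * b * ((a * j1%:R + b * j2%:R + j3%:R + a + b + 2)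
           * (a * j1%:R + b * j2%:R - j3%:R + a + b))
  / (4 * (j1.+1)%:R * (j2.+1)%:R).

Definition phiZ (phi : nat -> nat -> nat -> Hpoly) (i j k : int) : Hpoly :=
  match i, j, k with
  | Posz a, Posz b, Posz c => if admissible a b c then phi a b c else 0
  | _, _, _ => 0
  end.

Definition is_genus2_schur (phi : nat -> nat -> nat -> Hpoly) : Prop :=
  phi 0%N 0%N 0%N = 1 /\
  forall j1 j2 j3 : nat, admissible j1 j2 j3 ->
    [/\ 'X_i0 * phi j1 j2 j3 =
          \sum_(a : bool) \sum_(b : bool)
             Kc a b j1 j2 j3 *: phiZ phi (j1%:Z + sgnb a) (j2%:Z + sgnb b) j3%:Z,
        'X_i1 * phi j1 j2 j3 =
          \sum_(a : bool) \sum_(b : bool)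
             Kc a b j1 j3 j2 *: phiZ phi (j1%:Z + sgnb a) j2%:Z (j3%:Z + sgnb b)
      & 'X_i2 * phi j1 j2 j3 =
          \sum_(a : bool) \sum_(b : bool)
             Kc a b j2 j3 j1 *: phiZ phi j1%:Z (j2%:Z + sgnb a) (j3%:Z + sgnb b)].

Definition evalH (p : Hpoly) (x12 x13 x23 : algC) : algC :=
  p.@[ fun i : 'I_3 =>
         if i == i0 then x12 + x12^-1 else if i == i1 then x13 + x13^-1
         else x23 + x23^-1 ].

(* Main.v *)
Require Import Defs.
From HB Require Import structures.
From mathcomp Require Import all_boot all_order all_algebra all_field.
From mathcomp.multinomials Require Import mpoly.
From mathcomp Require Import ring lra zify.
Import Order.TTheory GRing.Theory Num.Theory.
Local Open Scope ring_scope.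

Definition fz (phi : nat -> nat -> nat -> Hpoly) (t u : algC) (a b c : int) : algC :=
  evalH (phiZ phi a b c) t u 1.

Lemma evalH_sum phi t u (G : bool -> bool -> int * int * int) (K : bool -> bool -> algC) :
  evalH (\sum_(a : bool) \sum_(b : bool) K a b *: phiZ phi (G a b).1.1 (G a b).1.2 (G a b).2) t u 1
  = \sum_(a : bool) \sum_(b : bool) K a b * fz phi t u (G a b).1.1 (G a b).1.2 (G a b).2.
Proof.
rewrite /evalH raddf_sum; apply: eq_bigr => a _; rewrite raddf_sum; apply: eq_bigr => b _.
exact: mevalZ.
Qed.

Lemma rels phi t u (j1 j2 j3 : nat) : is_genus2_schur phi -> admissible j1 j2 j3 ->
 [/\ (t + t^-1) * fz phi t u j1 j2 j3 =
      \sum_(a : bool) \sum_(b : bool) Kc a b j1 j2 j3 * fz phi t u (j1%:Z + sgnb a) (j2%:Z + sgnb b) j3,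
     (u + u^-1) * fz phi t u j1 j2 j3 =
      \sum_(a : bool) \sum_(b : bool) Kc a b j1 j3 j2 * fz phi t u (j1%:Z + sgnb a) j2 (j3%:Z + sgnb b)
   & 2 * fz phi t u j1 j2 j3 =
      \sum_(a : bool) \sum_(b : bool) Kc a b j2 j3 j1 * fz phi t u j1 (j2%:Z + sgnb a) (j3%:Z + sgnb b)].
Proof.
move=> [_ H] adm; have [e1 e2 e3] := H _ _ _ adm.
have ev : forall p q, evalH (p * q) t u 1 = evalH p t u 1 * evalH q t u 1.
  by move=> p q; rewrite /evalH mevalM.
have fE : fz phi t u j1 j2 j3 = evalH (phi j1 j2 j3) t u 1 by rewrite /fz /= adm.
have eX0 : evalH 'X_i0 t u 1 = t + t^-1 by rewrite /evalH mevalXU.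
have eX1 : evalH 'X_i1 t u 1 = u + u^-1 by rewrite /evalH mevalXU.
have eX2 : evalH 'X_i2 t u 1 = 2 by rewrite /evalH mevalXU /= invr1.
split.
- rewrite fE -eX0 -ev e1.
  exact: (evalH_sum phi t u (fun a b => (j1%:Z + sgnb a, j2%:Z + sgnb b, j3%:Z))).
- rewrite fE -eX1 -ev e2.
  exact: (evalH_sum phi t u (fun a b => (j1%:Z + sgnb a, j2%:Z, j3%:Z + sgnb b))).
- rewrite fE -eX2 -ev e3.
  exact: (evalH_sum phi t u (fun a b => (j1%:Z, j2%:Z + sgnb a, j3%:Z + sgnb b))).
Qed.

Lemma adm_skr (s k r : nat) : admissible (k + r) (s + k) (s + r).
Proof.
rewrite /admissible.
have -> : (k + r + (s + k) + (s + r) = 2 * (s + k + r))%N by lia.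
rewrite oddM /=; apply/and3P; split; lia.
Qed.

Definition G phi t u (s k r : int) := fz phi t u (k + r) (s + k) (s + r).

Lemma rel12 phi t u (s k r : nat) : is_genus2_schur phi ->
  (t + t^-1) * G phi t u s k r * ((k+r+1)%:R * (s+k+1)%:R) =
  (s+k+r+2)%:R * (k+1)%:R * G phi t u s (k%:Z+1) r
  + (r+1)%:R * s%:R * G phi t u (s%:Z-1) k (r%:Z+1)
  + (s+1)%:R * r%:R * G phi t u (s%:Z+1) k (r%:Z-1)
  + k%:R * (s+k+r+1)%:R * G phi t u s (k%:Z-1) r.
Proof.
move=> Hp; have [H _ _] := rels phi t u _ _ _ Hp (adm_skr s k r).
rewrite !big_bool /= in H.
have e0 : G phi t u s k r = fz phi t u (k+r)%N (s+k)%N (s+r)%N by rewrite /G -!PoszD.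
have e1 : G phi t u s (k%:Z+1) r = fz phi t u (Posz (k + r)%N + 1) (Posz (s + k)%N + 1) (s + r)%N.
  by rewrite /G; congr (fz _ _ _); lia.
have e2 : G phi t u (s%:Z-1) k (r%:Z+1) = fz phi t u (Posz (k + r)%N + 1) (Posz (s + k)%N - 1) (s + r)%N.
  by rewrite /G; congr (fz _ _ _); lia.
have e3 : G phi t u (s%:Z+1) k (r%:Z-1) = fz phi t u (Posz (k + r)%N - 1) (Posz (s + k)%N + 1) (s + r)%N.
  by rewrite /G; congr (fz _ _ _); lia.
have e4 : G phi t u s (k%:Z-1) r = fz phi t u (Posz (k + r)%N - 1) (Posz (s + k)%N - 1) (s + r)%N.
  by rewrite /G; congr (fz _ _ _); lia.
rewrite e0 H e1 e2 e3 e4 /Kc /=.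
rewrite !natrD ?mulrSr /=.
by field; rewrite -!natrD !natr1 !pnatr_eq0.
Qed.

Lemma rel13 phi t u (s k r : nat) : is_genus2_schur phi ->
  (u + u^-1) * G phi t u s k r * ((k+r+1)%:R * (s+r+1)%:R) =
  (s+k+r+2)%:R * (r+1)%:R * G phi t u s k (r%:Z+1)
  + (k+1)%:R * s%:R * G phi t u (s%:Z-1) (k%:Z+1) r
  + (s+1)%:R * k%:R * G phi t u (s%:Z+1) (k%:Z-1) r
  + r%:R * (s+k+r+1)%:R * G phi t u s k (r%:Z-1).
Proof.
move=> Hp; have [_ H _] := rels phi t u _ _ _ Hp (adm_skr s k r).
rewrite !big_bool /= in H.
have e0 : G phi t u s k r = fz phi t u (k+r)%N (s+k)%N (s+r)%N by rewrite /G -!PoszD.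
have e1 : G phi t u s k (r%:Z+1) = fz phi t u (Posz (k + r)%N + 1) (s + k)%N (Posz (s + r)%N + 1).
  by rewrite /G; congr (fz _ _ _); lia.
have e2 : G phi t u (s%:Z-1) (k%:Z+1) r = fz phi t u (Posz (k + r)%N + 1) (s + k)%N (Posz (s + r)%N - 1).
  by rewrite /G; congr (fz _ _ _); lia.
have e3 : G phi t u (s%:Z+1) (k%:Z-1) r = fz phi t u (Posz (k + r)%N - 1) (s + k)%N (Posz (s + r)%N + 1).
  by rewrite /G; congr (fz _ _ _); lia.
have e4 : G phi t u s k (r%:Z-1) = fz phi t u (Posz (k + r)%N - 1) (s + k)%N (Posz (s + r)%N - 1).
  by rewrite /G; congr (fz _ _ _); lia.
rewrite e0 H e1 e2 e3 e4 /Kc /=.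
rewrite !natrD ?mulrSr /=.
by field; rewrite -!natrD !natr1 !pnatr_eq0.
Qed.

Lemma rel23 phi t u (s k r : nat) : is_genus2_schur phi ->
  2 * G phi t u s k r * ((s+k+1)%:R * (s+r+1)%:R) =
  (s+k+r+2)%:R * (s+1)%:R * G phi t u (s%:Z+1) k r
  + (k+1)%:R * r%:R * G phi t u s (k%:Z+1) (r%:Z-1)
  + (r+1)%:R * k%:R * G phi t u s (k%:Z-1) (r%:Z+1)
  + s%:R * (s+k+r+1)%:R * G phi t u (s%:Z-1) k r.
Proof.
move=> Hp; have [_ _ H] := rels phi t u _ _ _ Hp (adm_skr s k r).
rewrite !big_bool /= in H.
have e0 : G phi t u s k r = fz phi t u (k+r)%N (s+k)%N (s+r)%N by rewrite /G -!PoszD.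
have e1 : G phi t u (s%:Z+1) k r = fz phi t u (k + r)%N (Posz (s + k)%N + 1) (Posz (s + r)%N + 1).
  by rewrite /G; congr (fz _ _ _); lia.
have e2 : G phi t u s (k%:Z+1) (r%:Z-1) = fz phi t u (k + r)%N (Posz (s + k)%N + 1) (Posz (s + r)%N - 1).
  by rewrite /G; congr (fz _ _ _); lia.
have e3 : G phi t u s (k%:Z-1) (r%:Z+1) = fz phi t u (k + r)%N (Posz (s + k)%N - 1) (Posz (s + r)%N + 1).
  by rewrite /G; congr (fz _ _ _); lia.
have e4 : G phi t u (s%:Z-1) k r = fz phi t u (k + r)%N (Posz (s + k)%N - 1) (Posz (s + r)%N - 1).
  by rewrite /G; congr (fz _ _ _); lia.
rewrite e0 H e1 e2 e3 e4 /Kc /=.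
rewrite !natrD ?mulrSr /=.
by field; rewrite -!natrD !natr1 !pnatr_eq0.
Qed.

Lemma sumL (F : nat -> algC) n : \sum_(k < n.+1) F k = F 0%N + \sum_(k < n) F k.+1.
Proof. by rewrite big_ord_recl. Qed.
Lemma sumR (F : nat -> algC) n : \sum_(k < n.+1) F k = \sum_(k < n) F k + F n.
Proof. by rewrite big_ord_recr. Qed.

Definition LL (g : int -> int -> int -> algC) (j : nat) (s : int) :=
  \sum_(k < j.+1) g s k (j%:Z - k%:Z).
Definition MM (g : int -> int -> int -> algC) (j : nat) (s : int) :=
  \sum_(k < j.+1) (2 * k%:R - j%:R) * g s k (j%:Z - k%:Z).

Definition H23 (g : int -> int -> int -> algC) := forall s k r : nat,
  2 * g s k r * ((s+k+1)%:R * (s+r+1)%:R) =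
  (s+k+r+2)%:R * (s+1)%:R * g (s%:Z+1) k r
  + (k+1)%:R * r%:R * g s (k%:Z+1) (r%:Z-1)
  + (r+1)%:R * k%:R * g s (k%:Z-1) (r%:Z+1)
  + s%:R * (s+k+r+1)%:R * g (s%:Z-1) k r.

Lemma h23j g (h : H23 g) (s j k : nat) : (k <= j)%N ->
  2 * g s k (j%:Z - k%:Z) * ((s+k+1)%:R * (s%:R + j%:R - k%:R + 1)) =
  (s+j+2)%:R * (s+1)%:R * g (s%:Z+1) k (j%:Z - k%:Z)
  + (k+1)%:R * (j%:R - k%:R) * g s k.+1 (j%:Z - k.+1%:Z)
  + (j%:R - k%:R + 1) * k%:R * g s (k%:Z-1) (j%:Z - (k%:Z - 1))
  + s%:R * (s+j+1)%:R * g (s%:Z-1) k (j%:Z - k%:Z).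
Proof.
move=> kj; have H := h s k (j - k)%N.
have q1 : (s + k + (j - k) + 2 = s + j + 2)%N by lia.
have q2 : (s + k + (j - k) + 1 = s + j + 1)%N by lia.
rewrite q1 q2 in H.
have e1 : (Posz (j-k)%N) = j%:Z - k%:Z by lia.
have e2 : ((j-k)%N%:Z - 1) = j%:Z - k.+1%:Z by lia.
have e3 : ((j-k)%N%:Z + 1) = j%:Z - (k%:Z - 1) by lia.
have e4 : (k%:Z + 1) = k.+1 by lia.
rewrite e2 e3 e1 e4 !natrD !(natrB _ kj) in H.
by rewrite !natrD; apply: etrans (etrans _ H) _; ring.

Qed.

Lemma L_step g (h : H23 g) (j s : nat) :
  ((s+1)%:R*(s+j+2)%:R + s%:R*(s+j+1)%:R) * LL g j s =
  (s+j+2)%:R*(s+1)%:R * LL g j (s%:Z+1) + s%:R*(s+j+1)%:R * LL g j (s%:Z-1).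
Proof.
have E : \sum_(k < j.+1) 2 * g s k (j%:Z - k%:Z) * ((s+k+1)%:R * (s%:R + j%:R - k%:R + 1)) =
  \sum_(k < j.+1) ((s+j+2)%:R * (s+1)%:R * g (s%:Z+1) k (j%:Z - k%:Z)
  + (k+1)%:R * (j%:R - k%:R) * g s k.+1 (j%:Z - k.+1%:Z)
  + (j%:R - k%:R + 1) * k%:R * g s (k%:Z-1) (j%:Z - (k%:Z - 1))
  + s%:R * (s+j+1)%:R * g (s%:Z-1) k (j%:Z - k%:Z)).
  by apply: eq_bigr => k _; apply: h23j => //; rewrite -ltnS.
rewrite !big_split /= -!mulr_sumr in E.
have hX : \sum_(k < j.+1) (k+1)%:R * (j%:R - k%:R) * g s k.+1 (j%:Z - k.+1%:Z) =
   \sum_(k < j.+1) k%:R * (j%:R - k%:R + 1) * g s k (j%:Z - k%:Z).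
  rewrite (sumR (fun k => (k+1)%:R * (j%:R - k%:R) * g s k.+1 (j%:Z - k.+1%:Z))).
  rewrite (sumL (fun k => k%:R * (j%:R - k%:R + 1) * g s k (j%:Z - k%:Z))) /=.
  rewrite ?subrr ?mulr0n ?mulr0 ?mul0r ?addr0 ?add0r.
  by apply: eq_bigr => k _; rewrite !natrD mulrSr; ring.
have hY : \sum_(k < j.+1) (j%:R - k%:R + 1) * k%:R * g s (k%:Z-1) (j%:Z - (k%:Z - 1)) =
   \sum_(k < j.+1) (k+1)%:R * (j%:R - k%:R) * g s k (j%:Z - k%:Z).
  rewrite (sumL (fun k => (j%:R - k%:R + 1) * k%:R * g s (k%:Z-1) (j%:Z - (k%:Z - 1)))).
  rewrite (sumR (fun k => (k+1)%:R * (j%:R - k%:R) * g s k (j%:Z - k%:Z))) /=.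
  rewrite ?subrr ?mulr0n ?mulr0 ?mul0r ?addr0 ?add0r.
  apply: eq_bigr => k _.
  have -> : g s (k.+1%:Z - 1) (j%:Z - (k.+1%:Z - 1)) = g s k (j%:Z - k%:Z) by congr (g _ _); lia.
  by rewrite !natrD mulrSr; ring.
rewrite hX hY in E.
rewrite /LL.
have E2 : ((s+1)%:R*(s+j+2)%:R + s%:R*(s+j+1)%:R) * \sum_(k < j.+1) g s k (j%:Z - k%:Z) =
  \sum_(k < j.+1) 2 * g s k (j%:Z - k%:Z) * ((s+k+1)%:R * (s%:R + j%:R - k%:R + 1))
  - \sum_(k < j.+1) k%:R * (j%:R - k%:R + 1) * g s k (j%:Z - k%:Z)
  - \sum_(k < j.+1) (k+1)%:R * (j%:R - k%:R) * g s k (j%:Z - k%:Z).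
  rewrite mulr_sumr -!sumrB; apply: eq_bigr => k _; rewrite !natrD; ring.
rewrite E2 E; ring.
Qed.

Lemma M_step g (h : H23 g) (j s : nat) :
  ((s+1)%:R*(s+j+2)%:R + s%:R*(s+j+1)%:R + 2) * MM g j s =
  (s+j+2)%:R*(s+1)%:R * MM g j (s%:Z+1) + s%:R*(s+j+1)%:R * MM g j (s%:Z-1).
Proof.
have E : \sum_(k < j.+1) (2 * k%:R - j%:R) * (2 * g s k (j%:Z - k%:Z) * ((s+k+1)%:R * (s%:R + j%:R - k%:R + 1))) =
  \sum_(k < j.+1) ((s+j+2)%:R * (s+1)%:R * ((2 * k%:R - j%:R) * g (s%:Z+1) k (j%:Z - k%:Z))
  + (2 * k%:R - j%:R) * (k+1)%:R * (j%:R - k%:R) * g s k.+1 (j%:Z - k.+1%:Z)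
  + (2 * k%:R - j%:R) * (j%:R - k%:R + 1) * k%:R * g s (k%:Z-1) (j%:Z - (k%:Z - 1))
  + s%:R * (s+j+1)%:R * ((2 * k%:R - j%:R) * g (s%:Z-1) k (j%:Z - k%:Z))).
  apply: eq_bigr => k _; rewrite h23j //; [ring | by rewrite -ltnS].
rewrite !big_split /= -!mulr_sumr in E.
have hX : \sum_(k < j.+1) (2 * k%:R - j%:R) * (k+1)%:R * (j%:R - k%:R) * g s k.+1 (j%:Z - k.+1%:Z) =
   \sum_(k < j.+1) (2 * k%:R - 2 - j%:R) * k%:R * (j%:R - k%:R + 1) * g s k (j%:Z - k%:Z).
  rewrite (sumR (fun k => (2 * k%:R - j%:R) * (k+1)%:R * (j%:R - k%:R) * g s k.+1 (j%:Z - k.+1%:Z))).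
  rewrite (sumL (fun k => (2 * k%:R - 2 - j%:R) * k%:R * (j%:R - k%:R + 1) * g s k (j%:Z - k%:Z))) /=.
  rewrite ?subrr ?mulr0n ?mulr0 ?mul0r ?addr0 ?add0r.
  by apply: eq_bigr => k _; rewrite !natrD mulrSr; ring.
have hY : \sum_(k < j.+1) (2 * k%:R - j%:R) * (j%:R - k%:R + 1) * k%:R * g s (k%:Z-1) (j%:Z - (k%:Z - 1)) =
   \sum_(k < j.+1) (2 * k%:R + 2 - j%:R) * (k+1)%:R * (j%:R - k%:R) * g s k (j%:Z - k%:Z).
  rewrite (sumL (fun k => (2 * k%:R - j%:R) * (j%:R - k%:R + 1) * k%:R * g s (k%:Z-1) (j%:Z - (k%:Z - 1)))).
  rewrite (sumR (fun k => (2 * k%:R + 2 - j%:R) * (k+1)%:R * (j%:R - k%:R) * g s k (j%:Z - k%:Z))) /=.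
  rewrite ?subrr ?mulr0n ?mulr0 ?mul0r ?addr0 ?add0r.
  apply: eq_bigr => k _.
  have -> : g s (k.+1%:Z - 1) (j%:Z - (k.+1%:Z - 1)) = g s k (j%:Z - k%:Z) by congr (g _ _); lia.
  by rewrite !natrD mulrSr; ring.
rewrite hX hY in E.
rewrite /MM.
have E2 : ((s+1)%:R*(s+j+2)%:R + s%:R*(s+j+1)%:R + 2) * \sum_(k < j.+1) (2 * k%:R - j%:R) * g s k (j%:Z - k%:Z) =
  \sum_(k < j.+1) (2 * k%:R - j%:R) * (2 * g s k (j%:Z - k%:Z) * ((s+k+1)%:R * (s%:R + j%:R - k%:R + 1)))
  - \sum_(k < j.+1) (2 * k%:R - 2 - j%:R) * k%:R * (j%:R - k%:R + 1) * g s k (j%:Z - k%:Z)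
  - \sum_(k < j.+1) (2 * k%:R + 2 - j%:R) * (k+1)%:R * (j%:R - k%:R) * g s k (j%:Z - k%:Z).
  rewrite mulr_sumr -!sumrB; apply: eq_bigr => k _; rewrite !natrD; ring.
rewrite E2 E; ring.
Qed.

Definition H12 (g : int -> int -> int -> algC) (y : algC) := forall s k r : nat,
  y * g s k r * ((k+r+1)%:R * (s+k+1)%:R) =
  (s+k+r+2)%:R * (k+1)%:R * g s (k%:Z+1) r
  + (r+1)%:R * s%:R * g (s%:Z-1) k (r%:Z+1)
  + (s+1)%:R * r%:R * g (s%:Z+1) k (r%:Z-1)
  + k%:R * (s+k+r+1)%:R * g s (k%:Z-1) r.

Definition H13 (g : int -> int -> int -> algC) (y : algC) := forall s k r : nat,
  y * g s k r * ((k+r+1)%:R * (s+r+1)%:R) =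
  (s+k+r+2)%:R * (r+1)%:R * g s k (r%:Z+1)
  + (k+1)%:R * s%:R * g (s%:Z-1) (k%:Z+1) r
  + (s+1)%:R * k%:R * g (s%:Z+1) (k%:Z-1) r
  + r%:R * (s+k+r+1)%:R * g s k (r%:Z-1).

Lemma I12 g y (h : H12 g y) (n : nat) :
  \sum_(k < n.+2) (n.+2)%:R * (k+1)%:R * y * g 0 k (n.+1%:Z - k%:Z) =
  \sum_(k < n.+2) ((n.+3)%:R * (k+1)%:R * g 0 k.+1 (n.+2%:Z - k.+1%:Z)
     + (n.+1%:R - k%:R) * g 1 k (n%:Z - k%:Z)
     + k%:R * (n.+2)%:R * g 0 (k%:Z - 1) (n%:Z - (k%:Z - 1))).
Proof.
apply: eq_bigr => k _.
have kn : (k <= n.+1)%N by rewrite -ltnS.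
have H := h 0%N k (n.+1 - k)%N.
rewrite !add0n ?mulr0n ?mul0r ?mulr0 ?addr0 in H.
have q1 : (k + (n.+1 - k) + 2 = n.+3)%N by lia.
have q2 : (k + (n.+1 - k) + 1 = n.+2)%N by lia.
rewrite q1 q2 in H.
have e1 : Posz (n.+1 - k)%N = n.+1%:Z - k%:Z by lia.
have e2 : (k%:Z + 1) = k.+1 by lia.
have e3 : ((n.+1 - k)%N%:Z - 1) = n%:Z - k%:Z by lia.
rewrite e3 e1 e2 !natrD !(natrB _ kn) in H.
have e4 : g (0 + 1) k (n%:Z - k%:Z) = g 1 k (n%:Z - k%:Z) by [].
have e5 : g 0 k.+1 (n.+1%:Z - k%:Z) = g 0 k.+1 (n.+2%:Z - k.+1%:Z) by congr (g _ _); lia.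
have e6 : g 0 (k%:Z - 1) (n.+1%:Z - k%:Z) = g 0 (k%:Z - 1) (n%:Z - (k%:Z - 1)) by congr (g _ _); lia.
rewrite e4 e5 e6 in H.
apply: etrans (etrans _ H) _; rewrite ?natrD; ring.
Qed.

Lemma I13 g y (h : H13 g y) (n : nat) :
  \sum_(k < n.+2) (n.+2)%:R * (n.+1%:R - k%:R + 1) * y * g 0 k (n.+1%:Z - k%:Z) =
  \sum_(k < n.+2) ((n.+3)%:R * (n.+1%:R - k%:R + 1) * g 0 k (n.+2%:Z - k%:Z)
     + k%:R * g 1 (k%:Z - 1) (n%:Z - (k%:Z - 1))
     + (n.+1%:R - k%:R) * (n.+2)%:R * g 0 k (n%:Z - k%:Z)).
Proof.
apply: eq_bigr => k _.
have kn : (k <= n.+1)%N by rewrite -ltnS.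
have H := h 0%N k (n.+1 - k)%N.
rewrite !add0n ?mulr0n ?mul0r ?mulr0 ?addr0 in H.
have q1 : (k + (n.+1 - k) + 2 = n.+3)%N by lia.
have q2 : (k + (n.+1 - k) + 1 = n.+2)%N by lia.
rewrite q1 q2 in H.
have e1 : Posz (n.+1 - k)%N = n.+1%:Z - k%:Z by lia.
have e2 : ((n.+1 - k)%N%:Z + 1) = n.+2%:Z - k%:Z by lia.
have e3 : ((n.+1 - k)%N%:Z - 1) = n%:Z - k%:Z by lia.
rewrite e3 e2 e1 !natrD !(natrB _ kn) in H.
have e4 : g (0 + 1) (k%:Z - 1) (n.+1%:Z - k%:Z) = g 1 (k%:Z - 1) (n%:Z - (k%:Z - 1)) by congr (g _ _); lia.
rewrite e4 in H.
apply: etrans (etrans _ H) _; rewrite ?natrD; ring.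
Qed.

Lemma Sb1 (g : int -> int -> int -> algC) (n : nat) :
  \sum_(k < n.+2) (n.+3)%:R * (k+1)%:R * g 0 k.+1 (n.+2%:Z - k.+1%:Z) =
  \sum_(k < n.+3) (n.+3)%:R * k%:R * g 0 k (n.+2%:Z - k%:Z).
Proof.
rewrite (sumL (fun k => (n.+3)%:R * k%:R * g 0 k (n.+2%:Z - k%:Z))) /=.
rewrite ?mulr0n ?mulr0 ?mul0r ?add0r.
by apply: eq_bigr => k _; rewrite addn1.
Qed.

Lemma Sb2 (g : int -> int -> int -> algC) (n : nat) :
  \sum_(k < n.+2) (n.+3)%:R * (n.+1%:R - k%:R + 1) * g 0 k (n.+2%:Z - k%:Z) =
  \sum_(k < n.+3) (n.+3)%:R * (n.+2%:R - k%:R) * g 0 k (n.+2%:Z - k%:Z).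
Proof.
rewrite (sumR (fun k => (n.+3)%:R * (n.+2%:R - k%:R) * g 0 k (n.+2%:Z - k%:Z))) /=.
rewrite subrr mulr0 mul0r addr0.
by apply: eq_bigr => k _; rewrite [n.+2%:R]mulrSr; ring.
Qed.

Lemma Sc1 (g : int -> int -> int -> algC) (n : nat) (s : int) :
  \sum_(k < n.+2) (n.+1%:R - k%:R) * g s k (n%:Z - k%:Z) =
  \sum_(k < n.+1) (n.+1%:R - k%:R) * g s k (n%:Z - k%:Z).
Proof.
rewrite (sumR (fun k => (n.+1%:R - k%:R) * g s k (n%:Z - k%:Z))) /=.
by rewrite subrr mul0r addr0.
Qed.

Lemma Sc2 (g : int -> int -> int -> algC) (n : nat) (s : int) :
  \sum_(k < n.+2) k%:R * g s (k%:Z - 1) (n%:Z - (k%:Z - 1)) =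
  \sum_(k < n.+1) (k+1)%:R * g s k (n%:Z - k%:Z).
Proof.
rewrite (sumL (fun k => k%:R * g s (k%:Z - 1) (n%:Z - (k%:Z - 1)))) /=.
rewrite ?mulr0n ?mulr0 ?mul0r ?add0r.
apply: eq_bigr => k _; rewrite addn1; congr (_ * _); congr (g _ _); lia.
Qed.

Lemma Sc1' (g : int -> int -> int -> algC) (n : nat) (s : int) :
  \sum_(k < n.+2) (n.+1%:R - k%:R) * (n.+2)%:R * g s k (n%:Z - k%:Z) =
  \sum_(k < n.+1) (n.+1%:R - k%:R) * (n.+2)%:R * g s k (n%:Z - k%:Z).
Proof.
rewrite (sumR (fun k => (n.+1%:R - k%:R) * (n.+2)%:R * g s k (n%:Z - k%:Z))) /=.
by rewrite subrr !mul0r addr0.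
Qed.

Lemma Sc2' (g : int -> int -> int -> algC) (n : nat) (s : int) :
  \sum_(k < n.+2) k%:R * (n.+2)%:R * g s (k%:Z - 1) (n%:Z - (k%:Z - 1)) =
  \sum_(k < n.+1) (k+1)%:R * (n.+2)%:R * g s k (n%:Z - k%:Z).
Proof.
rewrite (sumL (fun k => k%:R * (n.+2)%:R * g s (k%:Z - 1) (n%:Z - (k%:Z - 1)))) /=.
rewrite ?mulr0n ?mulr0 ?mul0r ?add0r.
apply: eq_bigr => k _; rewrite addn1; congr (_ * _); congr (g _ _); lia.
Qed.

Definition PP (g : int -> int -> int -> algC) (n : nat) :=
  \sum_(k < n.+2) (k+1)%:R * g 0 k (n.+1%:Z - k%:Z).
Definition QQ (g : int -> int -> int -> algC) (n : nat) :=
  \sum_(k < n.+2) (n.+1%:R - k%:R + 1) * g 0 k (n.+1%:Z - k%:Z).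

Lemma E12 g y1 y2 (h1 : H12 g y1) (h2 : H13 g y2) (n : nat) :
  (n.+2)%:R * (y1 * PP g n + y2 * QQ g n) =
    (n.+3)%:R * (n.+2)%:R * LL g n.+2 0 + (n.+2)%:R * LL g n 1 + (n.+2)%:R ^+ 2 * LL g n 0
 /\ (n.+2)%:R * (y1 * PP g n - y2 * QQ g n) =
    (n.+3)%:R * MM g n.+2 0 - MM g n 1 + (n.+2)%:R * MM g n 0.
Proof.
have i12 := I12 g y1 h1 n; have i13 := I13 g y2 h2 n.
rewrite !big_split /= Sb1 Sc1 Sc2' in i12.
rewrite !big_split /= Sb2 Sc2 Sc1' in i13.
have eP : (n.+2)%:R * (y1 * PP g n) =
   \sum_(k < n.+2) (n.+2)%:R * (k+1)%:R * y1 * g 0 k (n.+1%:Z - k%:Z).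
  by rewrite /PP !mulr_sumr; apply: eq_bigr => k _; ring.
have eQ : (n.+2)%:R * (y2 * QQ g n) =
   \sum_(k < n.+2) (n.+2)%:R * (n.+1%:R - k%:R + 1) * y2 * g 0 k (n.+1%:Z - k%:Z).
  by rewrite /QQ !mulr_sumr; apply: eq_bigr => k _; ring.
have eb1 : \sum_(k < n.+3) (n.+3)%:R * k%:R * g 0 k (n.+2%:Z - k%:Z)
   + \sum_(k < n.+3) (n.+3)%:R * (n.+2%:R - k%:R) * g 0 k (n.+2%:Z - k%:Z)
   = (n.+3)%:R * (n.+2)%:R * LL g n.+2 0.
  by rewrite /LL -big_split mulr_sumr; apply: eq_bigr => k _ /=; ring.
have eb2 : \sum_(k < n.+3) (n.+3)%:R * k%:R * g 0 k (n.+2%:Z - k%:Z)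
   - \sum_(k < n.+3) (n.+3)%:R * (n.+2%:R - k%:R) * g 0 k (n.+2%:Z - k%:Z)
   = (n.+3)%:R * MM g n.+2 0.
  by rewrite /MM -sumrB mulr_sumr; apply: eq_bigr => k _ /=; ring.
have ec1 : \sum_(k < n.+1) (n.+1%:R - k%:R) * g 1 k (n%:Z - k%:Z)
   + \sum_(k < n.+1) (k+1)%:R * g 1 k (n%:Z - k%:Z) = (n.+2)%:R * LL g n 1.
  rewrite /LL -big_split mulr_sumr; apply: eq_bigr => k _ /=.
  by rewrite !natrD ![n.+2%:R]mulrSr ![n.+1%:R]mulrSr; ring.
have ec2 : \sum_(k < n.+1) (n.+1%:R - k%:R) * g 1 k (n%:Z - k%:Z)
   - \sum_(k < n.+1) (k+1)%:R * g 1 k (n%:Z - k%:Z) = - MM g n 1.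
  rewrite /MM -sumrB -sumrN; apply: eq_bigr => k _ /=.
  by rewrite !natrD ![n.+1%:R]mulrSr; ring.
have ec3 : \sum_(k < n.+1) (k+1)%:R * (n.+2)%:R * g 0 k (n%:Z - k%:Z)
   + \sum_(k < n.+1) (n.+1%:R - k%:R) * (n.+2)%:R * g 0 k (n%:Z - k%:Z)
   = (n.+2)%:R ^+ 2 * LL g n 0.
  rewrite /LL -big_split mulr_sumr; apply: eq_bigr => k _ /=.
  by rewrite !natrD ![n.+2%:R]mulrSr ![n.+1%:R]mulrSr; ring.
have ec4 : \sum_(k < n.+1) (k+1)%:R * (n.+2)%:R * g 0 k (n%:Z - k%:Z)
   - \sum_(k < n.+1) (n.+1%:R - k%:R) * (n.+2)%:R * g 0 k (n%:Z - k%:Z)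
   = (n.+2)%:R * MM g n 0.
  rewrite /MM -sumrB mulr_sumr; apply: eq_bigr => k _ /=.
  by rewrite !natrD ![n.+2%:R]mulrSr ![n.+1%:R]mulrSr; ring.
split.
  rewrite mulrDr eP eQ i12 i13 -eb1 -ec1 -ec3; ring.
rewrite mulrBr eP eQ i12 i13 -eb2 -ec2 -ec4; ring.
Qed.

Definition Tn (x : algC) (n : nat) := x ^+ n + (x ^+ n)^-1.
Definition Lc (t u : algC) (n : nat) :=
  (Tn t n - Tn u n) / (n%:R * (Tn t 1 - Tn u 1)).
Definition Mc (t u : algC) (n : nat) :=
  (n.+1)%:R * (2 * (Lc t u n.+1 + Lc t u n.-1) - (Tn t 1 + Tn u 1) * Lc t u n)
   / (Tn t 1 - Tn u 1).

Lemma Tn_rec (x : algC) (m : nat) : x != 0 -> Tn x m.+2 = Tn x 1 * Tn x m.+1 - Tn x m.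
Proof.
move=> hx; rewrite /Tn !exprS expr0 mulr1.
have hm : x ^+ m != 0 by rewrite expf_neq0.
by field; rewrite hx hm.
Qed.

Lemma Tn0 (x : algC) : Tn x 0 = 2.
Proof. by rewrite /Tn expr0 invr1. Qed.

Lemma Lc0 t u : Lc t u 0 = 0.
Proof. by rewrite /Lc !Tn0 subrr mul0r. Qed.

Lemma solve_lin (c x a b : algC) : c != 0 -> a = c * x + b -> x = (a - b) / c.
Proof. by move=> nz ->; field. Qed.

Lemma PQ_sum (g : int -> int -> int -> algC) n :
  PP g n + QQ g n = (n.+3)%:R * LL g n.+1 0 /\ PP g n - QQ g n = MM g n.+1 0.
Proof.
split.
  rewrite /PP /QQ /LL -big_split mulr_sumr; apply: eq_bigr => k _ /=.
  rewrite !natrD ![n.+3%:R]mulrSr ![n.+2%:R]mulrSr; ring.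
rewrite /PP /QQ /MM -sumrB; apply: eq_bigr => k _ /=.
rewrite !natrD; ring.
Qed.

Lemma nzn (n : nat) : (n.+1%:R : algC) != 0.
Proof. by rewrite pnatr_eq0. Qed.

Lemma nzk (n k : nat) : (n%:R + k.+1%:R : algC) != 0.
Proof. by rewrite -natrD pnatr_eq0 addnS. Qed.

Lemma base_vals (g : int -> int -> int -> algC) (t u : algC) :
  H12 g (Tn t 1) -> H13 g (Tn u 1) -> t != 0 -> u != 0 -> Tn t 1 - Tn u 1 != 0 -> g 0 0 0 = 1 ->
  (LL g 0 0 = Lc t u 1 /\ MM g 0 0 = Mc t u 1) /\ (LL g 1 0 = Lc t u 2 /\ MM g 1 0 = Mc t u 2).
Proof.
move=> h1 h2 ht hu hta g0.
have T2t := @Tn_rec t 0 ht; have T2u := @Tn_rec u 0 hu.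
have T3t := @Tn_rec t 1 ht; have T3u := @Tn_rec u 1 hu.
rewrite !Tn0 in T2t T2u.
have a1 := h1 0%N 0%N 0%N; have a2 := h2 0%N 0%N 0%N.
rewrite /= ?mulr0n ?mulr0 ?mul0r ?addr0 in a1 a2.
have e10 : g 0 (0%:Z + 1) 0 = g 0 1 0 by [].
have e01 : g 0 0 (0%:Z + 1) = g 0 0 1 by [].
rewrite e10 e01 g0 in a1 a2 *.
have eL0 : LL g 0 0 = 1 by rewrite /LL big_ord1 /= subrr g0.
have eM0 : MM g 0 0 = 0 by rewrite /MM big_ord1 /= ?mulr0n ?mulr0 ?mul0r ?subrr ?mul0r.
have eL1 : LL g 1 0 = g 0 0 1 + g 0 1 0.
  by rewrite /LL !big_ord_recr big_ord0 /= add0r.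
have eM1 : MM g 1 0 = - g 0 0 1 + g 0 1 0.
  rewrite /MM !big_ord_recr big_ord0 /= add0r.
  have -> : g 0 0 (1 - 0) = g 0 0 1 by [].
  have -> : g 0 1 (1 - 1) = g 0 1 0 by [].
  rewrite ?mulr0n ?mulr0 ?mulr1n; ring.
have y1E : g 0 1 0 = Tn t 1 / 2.
  move: a1; rewrite /= ?mulr1n ?mulr1 => ->; by field.
have y2E : g 0 0 1 = Tn u 1 / 2.
  move: a2; rewrite /= ?mulr1n ?mulr1 => ->; by field.
rewrite eL0 eM0 eL1 eM1 y1E y2E /Mc /= Lc0 /Lc T3t T3u T2t T2u.
split; split; field; rewrite ?hta ?pnatr_eq0 //.
Qed.

Lemma step_vals (g : int -> int -> int -> algC) (t u : algC) :
  H12 g (Tn t 1) -> H13 g (Tn u 1) -> H23 g -> t != 0 -> u != 0 -> Tn t 1 - Tn u 1 != 0 ->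
  forall n, LL g n 0 = Lc t u n.+1 -> MM g n 0 = Mc t u n.+1 ->
  LL g n.+1 0 = Lc t u n.+2 -> MM g n.+1 0 = Mc t u n.+2 ->
  LL g n.+2 0 = Lc t u n.+3 /\ MM g n.+2 0 = Mc t u n.+3.
Proof.
move=> h1 h2 h3 ht hu hta n IL0 IM0 IL1 IM1.
have [e1 e2] := E12 g (Tn t 1) (Tn u 1) h1 h2 n.
have [s1 s2] := PQ_sum g n.
have Ls := L_step g h3 n 0.
have Ms := M_step g h3 n 0.
have c0 : LL g n 0%Z = LL g n 0 by [].
have c1 : LL g n (0%Z + 1) = LL g n 1 by [].
have c2 : MM g n 0%Z = MM g n 0 by [].
have c3 : MM g n (0%Z + 1) = MM g n 1 by [].
rewrite c0 c1 !add0n !mul0r !addr0 mul1r mulr1 in Ls.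
rewrite c2 c3 !add0n !mul0r !addr0 mul1r mulr1 in Ms.
have nz2 : (n + 2)%:R != 0 :> algC by rewrite addn2 nzn.
have Ln1 : LL g n 1 = LL g n 0 by apply: (mulfI nz2); rewrite Ls.
have Mn1 : MM g n 1 = ((n + 2)%:R + 2) / (n + 2)%:R * MM g n 0.
  by apply: (mulfI nz2); rewrite -Ms; field; rewrite nzk.
rewrite addn2 in Mn1.
have ePP : PP g n = ((n.+3)%:R * LL g n.+1 0 + MM g n.+1 0) / 2 by rewrite -s1 -s2; field.
have eQQ : QQ g n = ((n.+3)%:R * LL g n.+1 0 - MM g n.+1 0) / 2 by rewrite -s1 -s2; field.
rewrite Ln1 ePP eQQ IL0 IL1 IM1 -addrA in e1.
rewrite Mn1 ePP eQQ IL1 IM1 IM0 -addrA in e2.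
have nz3 : (n.+3%:R * n.+2%:R : algC) != 0 by rewrite mulf_neq0 ?nzn.
split.
  rewrite (solve_lin _ _ _ _ nz3 e1) /Mc.
  rewrite ?[n.+4%:R]mulrSr ?[n.+3%:R]mulrSr ?[n.+2%:R]mulrSr ?[n.+1%:R]mulrSr.
  by field; rewrite !natr1 !pnatr_eq0 hta.
have nz4 : (n.+3%:R : algC) != 0 by rewrite nzn.
rewrite (solve_lin _ _ _ _ nz4 e2) /Mc.
case: n {IL0 IM0 IL1 IM1 e1 e2 Ls Ms c0 c1 c2 c3 nz2 nz3 nz4 Ln1 Mn1 ePP eQQ s1 s2} => [|m] /=.
  rewrite Lc0 /Lc !(@Tn_rec t) // !(@Tn_rec u) // !Tn0.
  by field; rewrite ?pnatr_eq0 ?hta.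
rewrite /Lc !(@Tn_rec t) // !(@Tn_rec u) //.
rewrite ?[m.+4.+1%:R]mulrSr ?[m.+4%:R]mulrSr ?[m.+3%:R]mulrSr ?[m.+2%:R]mulrSr ?[m.+1%:R]mulrSr.
by field; rewrite hta !natr1 !pnatr_eq0.
Qed.

Definition Pj (g : int -> int -> int -> algC) (t u : algC) (j : nat) : Prop :=
  LL g j 0 = Lc t u j.+1 /\ MM g j 0 = Mc t u j.+1.

Lemma main_ind (g : int -> int -> int -> algC) (t u : algC) :
  H12 g (Tn t 1) -> H13 g (Tn u 1) -> H23 g -> t != 0 -> u != 0 -> Tn t 1 - Tn u 1 != 0 ->
  g 0 0 0 = 1 -> forall j, LL g j 0 = Lc t u j.+1.
Proof.
move=> h1 h2 h3 ht hu hta g0.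
suff H : forall j, Pj g t u j /\ Pj g t u j.+1.
  by move=> j; case: (H j) => [[]].
elim=> [|n [[IL0 IM0] [IL1 IM1]]]; first exact: base_vals.
split; first by split.
exact: step_vals.
Qed.

Lemma L_const (g : int -> int -> int -> algC) : H23 g ->
  forall j (s : nat), LL g j s = LL g j 0.
Proof.
move=> h j.
have step : forall s : nat, LL g j (Posz s.+1) = LL g j (Posz s).
  elim=> [|s IH].
    have Ls := L_step g h j 0.
    rewrite /= !add0n mul0r !addr0 mul0r addr0 in Ls.
    have e : (Posz 0 + 1) = Posz 1 by [].
    rewrite e in Ls.
    have nz : ((j + 2)%:R : algC) != 0 by rewrite addn2 nzn.
    apply: (mulfI nz); move: Ls; rewrite mul1r mulr1 => ->; ring.
  have Ls := L_step g h j s.+1.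
  have e1 : (Posz s.+1 + 1) = Posz s.+2 by lia.
  have e2 : (Posz s.+1 - 1) = Posz s by lia.
  rewrite e1 e2 -IH in Ls.
  have nz : ((s.+1 + j + 2)%:R * (s.+1 + 1)%:R : algC) != 0.
    by rewrite mulf_neq0 // pnatr_eq0 ?addn2 ?addn1.
  apply: (mulfI nz).
  have -> : (s.+1 + j + 2)%:R * (s.+1 + 1)%:R * LL g j (Posz s.+2) =
    ((s.+1 + 1)%:R * (s.+1 + j + 2)%:R + s.+1%:R * (s.+1 + j + 1)%:R) * LL g j (Posz s.+1)
     - s.+1%:R * (s.+1 + j + 1)%:R * LL g j (Posz s.+1) by rewrite Ls; ring.
  ring.
elim=> [//|s IH]; by rewrite step.
Qed.

Lemma fz_nadm phi t u (a b c : nat) : ~~ admissible a b c -> fz phi t u a b c = 0.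
Proof. by move=> /negbTE na; rewrite /fz /phiZ na /evalH meval0. Qed.

Lemma fz_adm phi t u (a b c : nat) : admissible a b c -> fz phi t u a b c = evalH (phi a b c) t u 1.
Proof. by move=> ad; rewrite /fz /phiZ ad. Qed.

Lemma sum_layer (phi : nat -> nat -> nat -> Hpoly) (t u : algC) (j1 s : nat) :
  \sum_(j2 < (j1 + 2 * s).+1 | admissible j1 j2 (j1 + 2 * s - j2)%N)
     evalH (phi j1 j2 (j1 + 2 * s - j2)%N) t u 1 = LL (G phi t u) j1 s.
Proof.
set J := (j1 + 2 * s)%N.
rewrite big_mkcond /=.
have -> : \sum_(j2 < J.+1) (if admissible j1 j2 (J - j2)%N then evalH (phi j1 j2 (J - j2)%N) t u 1 else 0)
   = \sum_(j2 < J.+1) fz phi t u j1 j2 (J - j2)%N.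
  apply: eq_bigr => j2 _; case: ifP => ad; first by rewrite fz_adm.
  by rewrite fz_nadm // ad.
rewrite -(big_mkord xpredT (fun j2 => fz phi t u j1 j2 (J - j2)%N)).
rewrite (big_cat_nat _ (n := s)) //=; last by rewrite /J; lia.
rewrite (big_cat_nat _ (n := (s + j1.+1)%N) (m := s)) //=; last 2 first.
  by lia.
  by rewrite /J; lia.
rewrite big_nat_cond big1; last first.
  move=> i /andP [/andP [_ ltis] _]; apply: fz_nadm; rewrite /admissible /J.
  apply/negP => /and4P [_ _ h _]; lia.
rewrite add0r [X in _ + X]big_nat_cond [X in _ + X]big1 ?addr0; last first.
  move=> i /andP [/andP [lei ltiJ] _]; apply: fz_nadm; rewrite /admissible /J.
  apply/negP => /and4P [_ h _ _]; lia.
rewrite -{1}(add0n s) big_addn.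
have -> : (s + j1.+1 - s = j1.+1)%N by lia.
rewrite big_mkord /LL; apply: eq_bigr => k _.
have kl := ltn_ord k; rewrite /G /J; congr (fz _ _ _); lia.
Qed.

Lemma final_alg (t u : algC) (j1 : nat) : t != 0 -> u != 0 -> u != t -> u * t != 1 ->
  Lc t u j1.+1 = (1 - u ^+ j1.+1 * t ^- j1.+1) * (1 - u ^+ j1.+1 * t ^+ j1.+1)
    / ((j1.+1)%:R * u ^+ j1 * (1 - u / t) * (1 - u * t)).
Proof.
move=> ht hu hne hne1.
have hA : t ^+ j1.+1 != 0 by rewrite expf_neq0.
have hB : u ^+ j1 != 0 by rewrite expf_neq0.
rewrite /Lc /Tn !expr1 [u ^+ j1.+1]exprS.
have h1 : 1 - u * t != 0 by rewrite subr_eq0 eq_sym.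
have h2 : t - u != 0 by rewrite subr_eq0 eq_sym.
have h3 : (1 + j1%:R : algC) != 0 by rewrite addrC natr1 pnatr_eq0.
have h4 : (t * t + 1) * u + - (u * u + 1) * t != 0.
  have -> : (t * t + 1) * u + - (u * u + 1) * t = (t - u) * (- (1 - u * t)) by ring.
  by rewrite mulf_neq0 // oppr_eq0.
by field; rewrite ht h1 h2 hB h3 hA hu h4.
Qed.

Theorem mainTheorem15 (phi : nat -> nat -> nat -> Hpoly) (j1 J : nat)
  (x12 x13 : algC) :
  is_genus2_schur phi ->
  (j1 <= J)%N -> odd J = odd j1 ->
  x12 != 0 -> x13 != 0 -> x13 != x12 -> x13 * x12 != 1 ->
  \sum_(j2 < J.+1 | admissible j1 j2 (J - j2)%N) evalH (phi j1 j2 (J - j2)%N) x12 x13 1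
  = (1 - x13 ^+ j1.+1 * x12 ^- j1.+1) * (1 - x13 ^+ j1.+1 * x12 ^+ j1.+1)
    / ((j1.+1)%:R * x13 ^+ j1 * (1 - x13 / x12) * (1 - x13 * x12)).
Proof.
move=> Hp hJ hodd ht hu hne hne1.
have [s ->] : exists s, J = (j1 + 2 * s)%N.
  exists ((J - j1)./2); have := odd_double_half (J - j1).
  rewrite oddB // hodd addbb /= add0n -muln2 => h; lia.
rewrite sum_layer.
have h1 : H12 (G phi x12 x13) (Tn x12 1).
  by move=> s' k r; rewrite /Tn expr1; exact: rel12.
have h2 : H13 (G phi x12 x13) (Tn x13 1).
  by move=> s' k r; rewrite /Tn expr1; exact: rel13.
have h3 : H23 (G phi x12 x13).
  by move=> s' k r; exact: rel23.
have g0 : G phi x12 x13 0 0 0 = 1.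
  rewrite /G /fz /=; case: Hp => -> _.
  by rewrite /evalH meval1.
have hta : Tn x12 1 - Tn x13 1 != 0.
  have e : (Tn x12 1 - Tn x13 1) * (x12 * x13) = (x12 - x13) * (x13 * x12 - 1).
    by rewrite /Tn !expr1; field; rewrite ht hu.
  apply/negP => /eqP h0; move: e; rewrite h0 mul0r => /esym/eqP.
  rewrite mulf_eq0 !subr_eq0 (negbTE hne1) orbF => /eqP ex.
  by move: hne; rewrite ex eqxx.
rewrite (L_const _ h3 j1 s) (main_ind _ _ _ h1 h2 h3 ht hu hta g0).
exact: final_alg.
Qed.
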